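(* Let $R$ be a Noetherian commutative ring and let $I,J,K$ be ideals of $R$. Then there is an integer $t>0$ such that $$(J+I^nK):I = (J:I)+I^{n-1}K\quad\text{for every } n\geq t.$$
   Context: For ideals $A,B$ of $R$, $A:B=\{r\in R: rB\subseteq A\}$. *)

(* Defs.v *)
From mathcomp Require Import all_boot all_algebra.
Set Implicit Arguments. Unset Strict Implicit. Unset Printing Implicit Defensive.
Import GRing.Theory.
Local Open Scope ring_scope.

Section Ideals.
Variable R : comPzRingType.

Definition is_ideal (I : R -> Prop) : Prop :=
  I 0 /\ (forall x y, I x -> I y -> I (x + y)) /\ (forall r x, I x -> I (r * x)).

Definition set_eq (A B : R -> Prop) : Prop := forall x, A x <-> B x.

Definition idealD (I J : R -> Prop) : R -> Prop :=
  fun x => exists a b, I a /\ J b /\ x = a + b.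

Definition idealM (I J : R -> Prop) : R -> Prop :=
  fun x => exists (m : nat) (a b : 'I_m -> R),
    (forall i, I (a i) /\ J (b i)) /\ x = \sum_(i < m) a i * b i.

Definition idealT : R -> Prop := fun _ => True.

Fixpoint idealX (I : R -> Prop) (n : nat) : R -> Prop :=
  match n with
  | O => idealT
  | S k => idealM (idealX I k) I
  end.

Definition colon (A B : R -> Prop) : R -> Prop :=
  fun r => forall b, B b -> A (r * b).

Definition noetherian : Prop :=
  forall C : nat -> R -> Prop,
    (forall k, is_ideal (C k)) ->
    (forall k x, C k x -> C k.+1 x) ->
    exists m, forall k, (m <= k)%N -> set_eq (C k) (C m).

End Ideals.

(* Main.v *)
Require Import Defs.
From mathcomp Require Import all_boot all_algebra.
From mathcomp Require Import ring.
From Stdlib Require Import FunctionalExtensionality ClassicalEpsilon.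
Set Implicit Arguments. Unset Strict Implicit. Unset Printing Implicit Defensive.
Import GRing.Theory.
Local Open Scope ring_scope.

Section Vec.
Variable R : comPzRingType.
Definition V := nat -> nat -> R.
Definition vz : V := fun _ _ => 0.
Definition vadd (u v : V) : V := fun k i => u k i + v k i.
Definition vopp (u : V) : V := fun k i => - u k i.
Definition vsc (r : R) (u : V) : V := fun k i => r * u k i.
Definition sig (c : R) (u : V) : V :=
  fun k i => if k is k'.+1 then c * u k' i else 0.
Fixpoint vsum (d : nat) (f : nat -> V) : V :=
  if d is d'.+1 then vadd (vsum d' f) (f d') else vz.

Ltac vext := let k := fresh "k" in let i := fresh "i" in apply: functional_extensionality => k; apply: functional_extensionality => i.

Lemma vaddC u v : vadd u v = vadd v u.
Proof. vext; rewrite /vadd; ring. Qed.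
Lemma vaddA u v w : vadd u (vadd v w) = vadd (vadd u v) w.
Proof. vext; rewrite /vadd; ring. Qed.
Lemma vadd0 u : vadd vz u = u.
Proof. vext; rewrite /vadd /vz; ring. Qed.
Lemma vsubK u w : vadd (vadd u (vopp w)) w = u.
Proof. vext; rewrite /vadd /vopp; ring. Qed.

Lemma sig_add c u v : sig c (vadd u v) = vadd (sig c u) (sig c v).
Proof. vext; rewrite /sig /vadd; case: k => *; ring. Qed.
Lemma sig_opp c u : sig c (vopp u) = vopp (sig c u).
Proof. vext; rewrite /sig /vopp; case: k => *; ring. Qed.
Lemma sig_sc c r u : sig c (vsc r u) = vsc r (sig c u).
Proof. vext; rewrite /sig /vsc; case: k => *; ring. Qed.
Lemma sig_z c : sig c vz = vz.
Proof. vext; rewrite /sig /vz; case: k => *; ring. Qed.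
Lemma sigC c c' u : sig c (sig c' u) = sig c' (sig c u).
Proof. vext; rewrite /sig; case: k => [|[|k]] *; ring. Qed.

Lemma iter_add n c u v : iter n (sig c) (vadd u v) = vadd (iter n (sig c) u) (iter n (sig c) v).
Proof. elim: n => //= n ->; exact: sig_add. Qed.
Lemma iter_opp n c u : iter n (sig c) (vopp u) = vopp (iter n (sig c) u).
Proof. elim: n => //= n ->; exact: sig_opp. Qed.
Lemma iter_sc n c r u : iter n (sig c) (vsc r u) = vsc r (iter n (sig c) u).
Proof. elim: n => //= n ->; exact: sig_sc. Qed.
Lemma iter_z n c : iter n (sig c) vz = vz.
Proof. elim: n => //= n ->; exact: sig_z. Qed.
Lemma iter_sigC n c c' u : iter n (sig c) (sig c' u) = sig c' (iter n (sig c) u).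
Proof. elim: n => //= n ->; exact: sigC. Qed.

Lemma vsum_add d f g : vsum d (fun i => vadd (f i) (g i)) = vadd (vsum d f) (vsum d g).
Proof. elim: d => [|d IH] /=; first by vext; rewrite /vadd /vz addr0.
rewrite IH; vext; rewrite /vadd; ring. Qed.
Lemma vsum_opp d f : vsum d (fun i => vopp (f i)) = vopp (vsum d f).
Proof. elim: d => [|d IH] /=; first by vext; rewrite /vopp /vz oppr0.
rewrite IH; vext; rewrite /vadd /vopp; ring. Qed.
Lemma vsum_sc d r f : vsum d (fun i => vsc r (f i)) = vsc r (vsum d f).
Proof. elim: d => [|d IH] /=; first by vext; rewrite /vsc /vz mulr0.
rewrite IH; vext; rewrite /vadd /vsc; ring. Qed.
Lemma vsum_sig d c f : vsum d (fun i => sig c (f i)) = sig c (vsum d f).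
Proof. elim: d => [|d IH] /=; first by rewrite sig_z.
by rewrite IH sig_add. Qed.
Lemma vsum_z d f : (forall i, (i < d)%N -> f i = vz) -> vsum d f = vz.
Proof. elim: d => [|d IH] //= H; rewrite IH ?H ?vadd0 // => i Hi; apply: H; exact: ltnW. Qed.
Lemma vsum_eq d f g : (forall i, (i < d)%N -> f i = g i) -> vsum d f = vsum d g.
Proof. elim: d => [|d IH] //= H; rewrite IH ?H // => i Hi; apply: H; exact: ltnW. Qed.
Lemma vsumS d f : vsum d.+1 f = vadd (f 0%N) (vsum d (fun i => f i.+1)).
Proof. elim: d => [|d IH] /=; first by rewrite vaddC.
rewrite /= in IH; rewrite IH; by rewrite vaddA. Qed.

Variable a : nat -> R.

Definition submod (m : nat) (N : V -> Prop) :=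
  [/\ N vz, (forall u v, N u -> N v -> N (vadd u v)), (forall u, N u -> N (vopp u)),
   (forall r u, N u -> N (vsc r u)) & (forall j u, (j < m)%N -> N u -> N (sig (a j) u))].

Definition Noeth m (M : V -> Prop) :=
  forall Ch : nat -> V -> Prop, (forall k, submod m (Ch k)) ->
  (forall k v, Ch k v -> Ch k.+1 v) -> (forall k v, Ch k v -> M v) ->
  exists C, forall k v, (C <= k)%N -> Ch k v -> Ch C v.

Lemma chain_mono (Ch : nat -> V -> Prop) : (forall k v, Ch k v -> Ch k.+1 v) ->
  forall k k' v, (k <= k')%N -> Ch k v -> Ch k' v.
Proof. move=> H k k' v /subnK <-; elim: (k' - k)%N => //= n IH /IH; rewrite addSn; exact: H. Qed.

Definition ext (c : R) (M : V -> Prop) : V -> Prop := fun v =>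
  exists d (f : nat -> V), (forall i, (i < d)%N -> M (f i)) /\
    v = vsum d (fun i => iter i (sig c) (f i)).

End Vec.


Section GH.
Variable R : comPzRingType.
Variable a : nat -> R.
Local Notation V := (V R).

Definition pad d (f : nat -> V) i := if (i < d)%N then f i else vz R.

Lemma vsum_pad c d D f : (d <= D)%N ->
  vsum d (fun i => iter i (sig c) (f i)) = vsum D (fun i => iter i (sig c) (pad d f i)).
Proof.
elim: D => [|D IH]; first by rewrite leqn0 => /eqP ->.
rewrite leq_eqVlt => /orP [/eqP -> | HdD].
  apply: vsum_eq => i Hi; by rewrite /pad Hi.
rewrite /= -IH //; by rewrite /pad ltnNge -ltnS HdD /= iter_z vaddC vadd0.
Qed.

Lemma ext_sub c (M : V -> Prop) u : M u -> ext c M u.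
Proof. move=> Mu; exists 1%N, (fun _ => u); split => //=; by rewrite vadd0. Qed.

Lemma ext_submod m M : submod a m M -> submod a m.+1 (ext (a m) M).
Proof.
case=> M0 MD MN MZ MS; split.
- exists 0%N, (fun _ => vz R); split => //.
- move=> u v [d1 [f1 [H1 ->]]] [d2 [f2 [H2 ->]]].
  exists (maxn d1 d2), (fun i => vadd (pad d1 f1 i) (pad d2 f2 i)); split.
    move=> i _; rewrite /pad; apply: MD; case: ifP => *; auto.
  rewrite (vsum_pad _ _ (leq_maxl d1 d2)) (vsum_pad _ _ (leq_maxr d1 d2)) -vsum_add.
  apply: vsum_eq => i _; by rewrite iter_add.
- move=> u [d [f [H ->]]]; exists d, (fun i => vopp (f i)); split; first by auto.
  rewrite -vsum_opp; apply: vsum_eq => i _; by rewrite iter_opp.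
- move=> r u [d [f [H ->]]]; exists d, (fun i => vsc r (f i)); split; first by auto.
  rewrite -vsum_sc; apply: vsum_eq => i _; by rewrite iter_sc.
- move=> j u Hj [d [f [H ->]]]; rewrite ltnS leq_eqVlt in Hj.
  case/orP: Hj => [/eqP -> | Hj].
    exists d.+1, (fun i => if i is i'.+1 then f i' else vz R); split.
      by case=> [|i] //= /H.
    by rewrite vsumS /= vadd0 vsum_sig.
  exists d, (fun i => sig (a j) (f i)); split; first by auto.
  rewrite -vsum_sig; apply: vsum_eq => i _; by rewrite iter_sigC.
Qed.


Ltac vext := let k := fresh "k" in let i := fresh "i" in apply: functional_extensionality => k; apply: functional_extensionality => i.

Definition Eexp c d (f : nat -> V) u := vadd (vsum d (fun i => iter i (sig c) (f i))) (iter d (sig c) u).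

Lemma Eexp_add c d f g u v : Eexp c d (fun i => vadd (f i) (g i)) (vadd u v) = vadd (Eexp c d f u) (Eexp c d g v).
Proof.
rewrite /Eexp (vsum_eq (g := fun i => vadd (iter i (sig c) (f i)) (iter i (sig c) (g i)))); last by move=> *; rewrite iter_add.
rewrite vsum_add iter_add; vext; rewrite /vadd; ring.
Qed.
Lemma Eexp_opp c d f u : Eexp c d (fun i => vopp (f i)) (vopp u) = vopp (Eexp c d f u).
Proof.
rewrite /Eexp (vsum_eq (g := fun i => vopp (iter i (sig c) (f i)))); last by move=> *; rewrite iter_opp.
rewrite vsum_opp iter_opp; vext; rewrite /vadd /vopp; ring.
Qed.
Lemma Eexp_sc c d r f u : Eexp c d (fun i => vsc r (f i)) (vsc r u) = vsc r (Eexp c d f u).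
Proof.
rewrite /Eexp (vsum_eq (g := fun i => vsc r (iter i (sig c) (f i)))); last by move=> *; rewrite iter_sc.
rewrite vsum_sc iter_sc; vext; rewrite /vadd /vsc; ring.
Qed.
Lemma Eexp_sig c c' d f u : Eexp c d (fun i => sig c' (f i)) (sig c' u) = sig c' (Eexp c d f u).
Proof.
rewrite /Eexp (vsum_eq (g := fun i => sig c' (iter i (sig c) (f i)))); last by move=> *; rewrite iter_sigC.
by rewrite vsum_sig iter_sigC sig_add.
Qed.
Lemma Eexp_z c d : Eexp c d (fun _ => vz R) (vz R) = vz R.
Proof. rewrite /Eexp vsum_z ?iter_z ?vadd0 // => *; exact: iter_z. Qed.
Lemma Eexp_shift c d f u : Eexp c d.+1 (fun i => if i is i'.+1 then f i' else vz R) u = sig c (Eexp c d f u).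
Proof. by rewrite /Eexp vsumS /= vadd0 vsum_sig sig_add. Qed.
Lemma Eexp_diff c d f g x : vadd (Eexp c d f x) (vopp (Eexp c d g x)) =
  vsum d (fun i => iter i (sig c) (vadd (f i) (vopp (g i)))).
Proof.
rewrite (vsum_eq (g := fun i => vadd (iter i (sig c) (f i)) (vopp (iter i (sig c) (g i))))); last by move=> *; rewrite iter_add iter_opp.
rewrite vsum_add vsum_opp /Eexp; vext; rewrite /vadd /vopp; ring.
Qed.

Lemma GH m M : submod a m M -> Noeth a m M -> Noeth a m.+1 (ext (a m) M).
Proof.
move=> sM NM Ch sCh inc sub.
set c := a m.
pose L k d u := M u /\ exists f, (forall i, (i < d)%N -> M (f i)) /\ Ch k (Eexp c d f u).
case: sM => M0 MD MN MZ MS.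
have Lsub : forall k d, submod a m (L k d).
  move=> k d; case: (sCh k) => C0 CD CN CZ CS; split.
  - split => //; exists (fun _ => vz R); split => //; by rewrite Eexp_z.
  - move=> u v [Mu [f [Hf Cf]]] [Mv [g [Hg Cg]]]; split; first by auto.
    exists (fun i => vadd (f i) (g i)); split; first by auto.
    rewrite Eexp_add; auto.
  - move=> u [Mu [f [Hf Cf]]]; split; first by auto.
    exists (fun i => vopp (f i)); split; first by auto.
    rewrite Eexp_opp; auto.
  - move=> r u [Mu [f [Hf Cf]]]; split; first by auto.
    exists (fun i => vsc r (f i)); split; first by auto.
    rewrite Eexp_sc; auto.
  - move=> j u Hj [Mu [f [Hf Cf]]]; split; first by auto.
    exists (fun i => sig (a j) (f i)); split; first by auto.
    rewrite Eexp_sig; apply: CS => //; exact: ltnW.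
have Ld1 : forall k d u, L k d u -> L k d.+1 u.
  move=> k d u [Mu [f [Hf Cf]]]; split => //.
  exists (fun i => if i is i'.+1 then f i' else vz R); split; first by case=> [|i] // /Hf.
  rewrite Eexp_shift; case: (sCh k) => _ _ _ _ CS; exact: CS.
have Lmono : forall k k' d d' u, (k <= k')%N -> (d <= d')%N -> L k d u -> L k' d' u.
  move=> k k' d d' u Hk Hd [Mu [f [Hf Cf]]].
  have : L k' d u by split => //; exists f; split => //; exact: (chain_mono inc Hk).
  move: Hd => /subnK <-; elim: (d' - d)%N => //= n IH /IH; rewrite addSn; exact: Ld1.
have [c0 Hc0] : exists c0, forall k v, (c0 <= k)%N -> L k k v -> L c0 c0 v.
  apply: NM => //.
  - move=> k v; exact: Lmono.
  - by move=> k v [].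
have Hb : forall n, exists C, (c0 <= C)%N /\ forall d k v, (d < n)%N -> (C <= k)%N -> L k d v -> L C d v.
  elim=> [|n [C1 [h1 H1]]]; first by exists c0.
  have [cn Hn] : exists cn, forall k v, (cn <= k)%N -> L k n v -> L cn n v.
    apply: NM => //.
    - move=> k v; apply: Lmono => //.
    - by move=> k v [].
  exists (maxn C1 cn); split; first by apply: (leq_trans h1); exact: leq_maxl.
  move=> d k v; rewrite ltnS leq_eqVlt => /orP [/eqP -> | Hd] Hk Hv.
    apply: (Lmono cn _ n) => //; first exact: leq_maxr.
    apply: (Hn k) Hv; apply: leq_trans Hk; exact: leq_maxr.
  apply: (Lmono C1 _ d) => //; first exact: leq_maxl.
  apply: (H1 d k v Hd) Hv; apply: leq_trans Hk; exact: leq_maxl.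
have [C [hC HC]] := Hb c0.
have Hall : forall d k v, (C <= k)%N -> L k d v -> L C d v.
  move=> d k v Hk Hv; case: (ltnP d c0) => Hd; first exact: (HC d k v Hd Hk Hv).
  have He : L (maxn k d) (maxn k d) v by exact: (Lmono k _ d _ _ (leq_maxl k d) (leq_maxr k d) Hv).
  have := Hc0 _ _ (leq_trans Hd (leq_maxr k d)) He.
  by apply: Lmono.

exists C => k v Ck Chv.
have [d [f [Hf Ev]]] := sub _ _ Chv.
elim: d f v Hf Ev Chv => [|d IH] f v Hf Ev Chv.
  rewrite Ev /=; by case: (sCh C).
have Lf : L k d (f d).
  split; first exact: Hf.
  exists f; split; first by move=> i Hi; apply: Hf; exact: ltnW.
  by move: Chv; rewrite Ev.
have [_ [g [Hg ChCw]]] := Hall _ _ _ Ck Lf.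
have Chkw : Ch k (Eexp c d g (f d)) by exact: (chain_mono inc Ck).
have Hdiff := Eexp_diff c d f g (f d).
have Ev' : v = Eexp c d f (f d) by rewrite Ev.
case: (sCh k) => _ CkD CkN _ _.
case: (sCh C) => _ CCD _ _ _.
have : Ch C (vadd (Eexp c d f (f d)) (vopp (Eexp c d g (f d)))).
  apply: (IH (fun i => vadd (f i) (vopp (g i)))) => //.
  - move=> i Hi; apply: MD; [apply: Hf; exact: ltnW | apply: MN; exact: Hg].
  - apply: CkD; [by rewrite -Ev' | exact: CkN].
move=> /(CCD _ _) /(_ ChCw); by rewrite vsubK -Ev'.
Qed.

End GH.


Section Ideals.
Variable R : comPzRingType.
Implicit Types I J K A B : R -> Prop.

Lemma ideal_sum I m (F : 'I_m -> R) : is_ideal I -> (forall i, I (F i)) -> I (\sum_(i < m) F i).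
Proof. case=> I0 [ID _] H; apply: (big_ind (fun x => I x)) => //; auto. Qed.
Lemma ideal_opp I x : is_ideal I -> I x -> I (- x).
Proof. case=> _ [_ IM] H; rewrite -mulN1r; auto. Qed.
Lemma ideal_mulr I x r : is_ideal I -> I x -> I (x * r).
Proof. case=> _ [_ IM] H; rewrite mulrC; auto. Qed.

Lemma idealM_ideal A B : is_ideal A -> is_ideal (idealM A B).
Proof.
case=> A0 [AD AM]; split; last split.
- exists 0%N, (fun _ => 0), (fun _ => 0); split; first by case.
  by rewrite big_ord0.
- move=> x y [m1 [a1 [b1 [H1 ->]]]] [m2 [a2 [b2 [H2 ->]]]].
  exists (m1 + m2)%N, (fun i => match split i with inl j => a1 j | inr j => a2 j end),
    (fun i => match split i with inl j => b1 j | inr j => b2 j end); split.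
    by move=> i; case: (split i) => j.
  rewrite big_split_ord /=; congr (_ + _); apply: eq_bigr => i _.
    by rewrite (unsplitK (inl i : 'I_m1 + 'I_m2)).
  by rewrite (unsplitK (inr i : 'I_m1 + 'I_m2)).
- move=> r x [m [a1 [b1 [H ->]]]]; exists m, (fun i => r * a1 i), b1; split.
    move=> i; have [? ?] := H i; split; auto.
  rewrite mulr_sumr; apply: eq_bigr => i _; by rewrite mulrA.
Qed.

Lemma idealX_ideal I k : is_ideal (idealX I k).
Proof. elim: k => [|k IH] /=; [by repeat split | exact: idealM_ideal]. Qed.

Lemma idealD_ideal I J : is_ideal I -> is_ideal J -> is_ideal (idealD I J).
Proof.
case=> I0 [ID IM] [J0 [JD JM]]; split; last split.
- exists 0, 0; split => //; split => //; by rewrite addr0.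
- move=> x y [a1 [b1 [Ha1 [Hb1 ->]]]] [a2 [b2 [Ha2 [Hb2 ->]]]].
  exists (a1 + a2), (b1 + b2); split; auto; split; auto; ring.
- move=> r x [a1 [b1 [Ha1 [Hb1 ->]]]]; exists (r * a1), (r * b1); split; auto; split; auto; ring.
Qed.

Lemma idealM_single A B x y : A x -> B y -> idealM A B (x * y).
Proof.
move=> Ax By; exists 1%N, (fun _ => x), (fun _ => y); split => //.
by rewrite big_ord1.
Qed.

Lemma mulIX I K k d w : is_ideal I -> I d -> idealM (idealX I k) K w ->
  idealM (idealX I k.+1) K (d * w).
Proof.
move=> iI Id [m [c [b [H ->]]]]; exists m, (fun i => c i * d), b; split.
  move=> i; have [? ?] := H i; split => //=; exact: idealM_single.
rewrite mulr_sumr; apply: eq_bigr => i _; ring.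
Qed.

Lemma idealMX_sub I K k x : is_ideal I -> is_ideal K -> idealM (idealX I k) K x -> K x.
Proof.
move=> iI iK [m [c [b [H ->]]]]; apply: ideal_sum => // i; have [_ Kb] := H i.
case: iK => _ [_ KM]; auto.
Qed.

Definition spanl (l : seq R) (x : R) := exists r : nat -> R, x = \sum_(j < size l) r j * nth 0 l j.

Lemma fg I : noetherian R -> is_ideal I ->
  exists s (a : nat -> R), (forall j, I (a j)) /\
    forall x, I x -> exists r : nat -> R, x = \sum_(j < s) r j * a j.
Proof.
move=> noeR iI.
have H : forall l, exists x, I x /\ ((exists y, I y /\ ~ spanl l y) -> ~ spanl l x).
  move=> l; case: (classic (exists y, I y /\ ~ spanl l y)) => [[y [Iy Hy]]|Hn].
    by exists y.
  exists 0; split; first by case: iI.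
  by move=> /Hn.
pose nx l := proj1_sig (constructive_indefinite_description _ (H l)).
have nxP : forall l, I (nx l) /\ ((exists y, I y /\ ~ spanl l y) -> ~ spanl l (nx l)).
  move=> l; exact: (proj2_sig (constructive_indefinite_description _ (H l))).
pose fix bs n := if n is n'.+1 then rcons (bs n') (nx (bs n')) else [::].
pose b j := nx (bs j).
have bsE : forall n, bs n = mkseq b n.
  elim=> [|n IH] //; by rewrite mkseqS -IH.
pose C n x := exists r : nat -> R, x = \sum_(j < n) r j * b j.
have spanC : forall n x, spanl (bs n) x <-> C n x.
  move=> n x; rewrite /spanl bsE size_mkseq; split => [[r Hr]|[r Hr]]; exists r; rewrite Hr;
  apply: eq_bigr => j _; by rewrite nth_mkseq.
have iC : forall n, is_ideal (C n).
  move=> n; split; last split.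
  - exists (fun _ => 0); rewrite big1 // => j _; by rewrite mul0r.
  - move=> x y [r1 ->] [r2 ->]; exists (fun j => r1 j + r2 j); rewrite -big_split /=.
    apply: eq_bigr => j _; ring.
  - move=> r x [r1 ->]; exists (fun j => r * r1 j); rewrite mulr_sumr.
    apply: eq_bigr => j _; ring.
have incC : forall n x, C n x -> C n.+1 x.
  move=> n x [r ->]; exists (fun j => if (j < n)%N then r j else 0).
  rewrite big_ord_recr /= ltnn mul0r addr0; apply: eq_bigr => j _; by rewrite ltn_ord.
have [N HN] := noeR C iC incC.
exists N, b; split; first by move=> j; exact: (proj1 (nxP _)).
move=> x Ix; apply: NNPP => Hx.
have Hbad : ~ C N (b N).
  move=> HC; apply: (proj2 (nxP (bs N))).
    exists x; split => //; move/spanC => [r Hr]; apply: Hx; by exists r.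
  by apply/spanC.
apply: Hbad; apply/(HN N.+1 (leqnSn N)).
exists (fun j => if j == N then 1 else 0).
rewrite big_ord_recr /= eqxx mul1r big1 ?add0r // => j _.
by rewrite (ltn_eqF (ltn_ord j)) mul0r.
Qed.

End Ideals.


Section Main.
Variable R : comPzRingType.
Variables (I J K : R -> Prop) (s : nat) (a : nat -> R).
Hypothesis noeR : noetherian R.
Hypotheses (iI : is_ideal I) (iJ : is_ideal J) (iK : is_ideal K).
Hypothesis aI : forall j, I (a j).
Hypothesis gen : forall x, I x -> exists r : nat -> R, x = \sum_(j < s) r j * a j.
Local Notation V := (V R).

Ltac vext := let k := fresh "k" in let i := fresh "i" in apply: functional_extensionality => k; apply: functional_extensionality => i.

Definition M0 n (v : V) := (forall k i, (0 < k)%N || (n <= i)%N -> v k i = 0) /\ (forall i, K (v 0%N i)).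

Lemma M0_submod n : submod a 0 (M0 n).
Proof.
case: iK => K0 [KD KM]; split.
- by split.
- move=> u v [Hu1 Hu2] [Hv1 Hv2]; split => [k i H|i]; [by rewrite /vadd Hu1 ?Hv1 ?addr0 | rewrite /vadd; auto].
- move=> u [Hu1 Hu2]; split => [k i H|i]; [by rewrite /vopp Hu1 ?oppr0 | exact: ideal_opp].
- move=> r u [Hu1 Hu2]; split => [k i H|i]; [by rewrite /vsc Hu1 ?mulr0 | rewrite /vsc; auto].
- by [].
Qed.

Lemma Noeth0 n : Noeth a 0 (M0 n).
Proof.
elim: n => [|n IH] Ch sCh inc sub.
  exists 0%N => k v _ Hv.
  have -> : v = vz R by vext; apply: (proj1 (sub _ _ Hv)); rewrite orbT.
  by case: (sCh 0%N).
pose C k x := exists v, Ch k v /\ v 0%N n = x.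
have iC : forall k, is_ideal (C k).
  move=> k; case: (sCh k) => C0 CD CN CZ _; split; last split.
  - by exists (vz R).
  - move=> x y [u [Hu <-]] [v [Hv <-]]; exists (vadd u v); auto.
  - move=> r x [u [Hu <-]]; exists (vsc r u); auto.
have [c1 Hc1] := @noeR C iC (fun k x '(ex_intro v (conj Hv Hx)) => ex_intro _ v (conj (inc _ _ Hv) Hx)).
pose Ch' k v := Ch k v /\ v 0%N n = 0.
have [c2 Hc2] : exists c2, forall k v, (c2 <= k)%N -> Ch' k v -> Ch' c2 v.
  apply: IH.
  - move=> k; case: (sCh k) => C0 CD CN CZ _; split.
    + by split.
    + move=> u v [Hu Hu0] [Hv Hv0]; split; auto; by rewrite /vadd Hu0 Hv0 addr0.
    + move=> u [Hu Hu0]; split; auto; by rewrite /vopp Hu0 oppr0.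
    + move=> r u [Hu Hu0]; split; auto; by rewrite /vsc Hu0 mulr0.
    + by [].
  - move=> k v [Hv Hv0]; split; auto.
  - move=> k v [Hv Hv0]; have [H1 H2] := sub _ _ Hv; split => // k' i.
    case/orP=> [Hk|Hi]; first by apply: H1; rewrite Hk.
    move: Hi; rewrite leq_eqVlt => /orP [/eqP <-|Hi]; last by apply: H1; rewrite Hi orbT.
    case: k' => [|k'] //; by apply: H1.
exists (maxn c1 c2) => k v Hk Hv.
have Hk1 : (c1 <= k)%N by apply: leq_trans Hk; exact: leq_maxl.
have Hk2 : (c2 <= k)%N by apply: leq_trans Hk; exact: leq_maxr.
have [w [Hw Hwv]] : C c1 (v 0%N n) by apply/(Hc1 k Hk1); exists v.
have Hwk : Ch k w := chain_mono inc Hk1 Hw.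
case: (sCh k) => _ CD CN _ _; case: (sCh (maxn c1 c2)) => _ CD' _ _ _.
have Hd : Ch' k (vadd v (vopp w)) by split; [auto | rewrite /vadd /vopp Hwv; ring].
have [Hd2 _] := Hc2 _ _ Hk2 Hd.
rewrite -(vsubK v w); apply: CD'.
  apply: (chain_mono inc _ Hd2); exact: leq_maxr.
apply: (chain_mono inc _ Hw); exact: leq_maxl.
Qed.

Fixpoint Fm (m : nat) : V -> Prop := if m is m'.+1 then ext (a m') (Fm m') else M0 s.

Lemma F_props m : [/\ submod a m (Fm m), Noeth a m (Fm m) & forall v, M0 s v -> Fm m v].
Proof.
elim: m => [|m [H1 H2 H3]] /=.
  split => //; [exact: M0_submod | exact: Noeth0].
split; [exact: ext_submod | exact: GH | move=> v /H3; exact: ext_sub].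
Qed.


Definition e k i (z : R) : V := fun k' i' => if (k' == k) && (i' == i) then z else 0.
Definition pl n k (u : nat -> R) : V := fun k' i' => if (k' == k) && (i' < n)%N then u i' else 0.

Lemma pl_sum n k u : pl n k u = vsum n (fun i => e k i (u i)).
Proof.
elim: n => [|n IH] /=; first by vext; rewrite /pl /vz ltn0 andbF.
rewrite -IH; vext; rewrite /vadd /pl /e ltnS leq_eqVlt.
case: (k0 == k) => /=; last by rewrite addr0.
case: (ltngtP i n) => [H|H|->]; rewrite ?eqxx ?addr0 ?add0r //=.
all: try by rewrite (ltn_eqF H) ?addr0.
all: try by rewrite (gtn_eqF H) ?addr0.
Qed.

Lemma e_sig c k i z : sig c (e k i z) = e k.+1 i (c * z).
Proof. vext; rewrite /sig /e; case: k0 => [|k0] //=; case: ifP => _; ring. Qed.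
Lemma e_add k i x y : e k i (x + y) = vadd (e k i x) (e k i y).
Proof. vext; rewrite /vadd /e; case: ifP => _; ring. Qed.
Lemma e_sc k i r x : e k i (r * x) = vsc r (e k i x).
Proof. vext; rewrite /vsc /e; case: ifP => _; ring. Qed.
Lemma e_z k i : e k i 0 = vz R.
Proof. vext; rewrite /vz /e; case: ifP => _; ring. Qed.

Lemma submod_vsum m S n f : submod a m S -> (forall i, (i < n)%N -> S (f i)) -> S (vsum n f).
Proof.
case=> S0 SD _ _ _; elim: n => [|n IH] H //=; apply: SD; last exact: H.
apply: IH => i Hi; apply: H; exact: ltnW.
Qed.

Lemma IK_in_F k z : idealM (idealX I k) K z -> forall i, (i < s)%N -> Fm s (e k i z).
Proof.
have [[F0 FD FN FZ FS] _ M0F] := F_props s.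
pose G k z := forall i, (i < s)%N -> Fm s (e k i z).
have Gid : forall k, is_ideal (G k).
  move=> k'; split; last split.
  - by move=> i _; rewrite e_z.
  - move=> x y Hx Hy i Hi; rewrite e_add; auto.
  - move=> r x Hx i Hi; rewrite e_sc; auto.
have A : forall k c kk, idealX I k c -> K kk -> G k (c * kk).
  elim=> [|k' IH] c kk Hc Hk.
    move=> i Hi; apply: M0F; split => [k'' i'|i'].
      rewrite /e; case: k'' => [|k''] //=; case: eqP => // -> Hs.
      by move: Hi; rewrite ltnNge Hs.
    rewrite /e /=; case: ifP => _; [| by case: iK].
    rewrite mulrC; exact: ideal_mulr.
  case: Hc => [m [c' [d [H ->]]]]; rewrite mulr_suml; apply: ideal_sum => // l.
  have [Hc' Hd] := H l; have [r ->] := gen Hd.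
  have -> : c' l * (\sum_(j < s) r j * a j) * kk = \sum_(j < s) r j * (a j * (c' l * kk)).
    rewrite mulr_sumr mulr_suml; apply: eq_bigr => j _; ring.
  apply: ideal_sum => // j; case: (Gid k'.+1) => _ [_ GM]; apply: GM.
  move=> i Hi; rewrite -e_sig; apply: FS => //; exact: IH.
move=> Hz; have HG : G k z; last exact: HG.
case: Hz => [m [c [kk [H ->]]]]; apply: ideal_sum => // l; have [? ?] := H l; exact: A.
Qed.

Definition Qk k (v : V) := exists x (j : nat -> R), (forall i, J (j i)) /\
  (forall i, (i < s)%N -> idealM (idealX I k) K (x * a i + j i)) /\
  v = pl s k (fun i => x * a i + j i).

Definition Gen c (v : V) := forall S, submod a s S -> (forall k w, (k <= c)%N -> Qk k w -> S w) -> S v.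

Lemma Gen_submod c : submod a s (Gen c).
Proof.
split.
- by move=> S [] *.
- move=> u v Hu Hv S sS HS; case: (sS) => _ SD _ _ _; apply: SD; [exact: Hu | exact: Hv].
- move=> u Hu S sS HS; case: (sS) => _ _ SN _ _; apply: SN; exact: Hu.
- move=> r u Hu S sS HS; case: (sS) => _ _ _ SZ _; apply: SZ; exact: Hu.
- move=> j u Hj Hu S sS HS; case: (sS) => _ _ _ _ SS; apply: SS => //; exact: Hu.
Qed.

Lemma Qk_F k v : Qk k v -> Fm s v.
Proof.
case=> x [j [_ [H ->]]]; rewrite pl_sum; have [sF _ _] := F_props s.
apply: (submod_vsum sF) => i Hi; apply: IK_in_F => //; exact: H.
Qed.

Definition P k := colon (idealD J (idealM (idealX I k) K)) I.
Definition E C k y := if (k <= C)%N then P k y else idealD J (idealM (idealX I k.-1) K) y.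

Lemma colon_ideal (A B : R -> Prop) : is_ideal A -> is_ideal (colon A B).
Proof.
case=> A0 [AD AM]; split; last split.
- by move=> b _; rewrite mul0r.
- move=> x y Hx Hy b Hb; rewrite mulrDl; auto.
- move=> r x Hx b Hb; rewrite -mulrA; auto.
Qed.

Lemma E_ideal C k : is_ideal (E C k).
Proof.
case H : (k <= C)%N; rewrite /E H; last by apply: idealD_ideal => //; exact: (idealM_ideal _ (idealX_ideal _ _)).
apply: colon_ideal; apply: idealD_ideal => //; exact: (idealM_ideal _ (idealX_ideal _ _)).
Qed.

Definition Gset C (v : V) := forall k, exists y (j : nat -> R), (forall i, J (j i)) /\ E C k y /\
  forall i, (i < s)%N -> v k i = y * a i + j i.

Lemma Gset_submod C : submod a s (Gset C).
Proof.
case: iJ => J0 [JD JM].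
split.
- move=> k; exists 0, (fun _ => 0); split => //; split; first by case: (E_ideal C k).
  move=> i _; rewrite /vz; ring.
- move=> u v Hu Hv k; have [y1 [j1 [H1 [E1 V1]]]] := Hu k; have [y2 [j2 [H2 [E2 V2]]]] := Hv k.
  exists (y1 + y2), (fun i => j1 i + j2 i); split; first by auto.
  split; first by case: (E_ideal C k) => _ [ED _]; auto.
  move=> i Hi; rewrite /vadd V1 // V2 //; ring.
- move=> u Hu k; have [y1 [j1 [H1 [E1 V1]]]] := Hu k.
  exists (- y1), (fun i => - j1 i); split; first by move=> i; exact: ideal_opp.
  split; first by apply: ideal_opp => //; exact: E_ideal.
  move=> i Hi; rewrite /vopp V1 //; ring.
- move=> r u Hu k; have [y1 [j1 [H1 [E1 V1]]]] := Hu k.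
  exists (r * y1), (fun i => r * j1 i); split; first by auto.
  split; first by case: (E_ideal C k) => _ [_ EM]; auto.
  move=> i Hi; rewrite /vsc V1 //; ring.
- move=> j0 u Hj0 Hu [|k].
    exists 0, (fun _ => 0); split => //; split; first by case: (E_ideal C 0%N).
    move=> i _; rewrite /sig; ring.
  have [y1 [j1 [H1 [E1 V1]]]] := Hu k.
  exists (a j0 * y1), (fun i => a j0 * j1 i); split; first by auto.
  split; last by move=> i Hi; rewrite /sig V1 //; ring.
  move: E1; rewrite /E; case: (leqP k.+1 C) => HkC.
    rewrite (ltnW HkC) => Hy b Hb; have [jj [w [Hjj [Hw Heq]]]] := Hy b Hb.
    exists (a j0 * jj), (a j0 * w); split; first by auto.
    split; first by apply: mulIX.
    by rewrite -mulrA Heq mulrDr.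
  case: (leqP k C) => HkC2 /=.
    move=> Hy; have := Hy (a j0) (aI j0); by rewrite mulrC.
  case=> jj [w [Hjj [Hw ->]]]; exists (a j0 * jj), (a j0 * w); split; first by auto.
  split; last by rewrite mulrDr.
  have -> : k = k.-1.+1 by rewrite prednK //; apply: leq_ltn_trans HkC2.
  by apply: mulIX.
Qed.

Lemma pl_eval n k u i : (i < n)%N -> pl n k u k i = u i.
Proof. by rewrite /pl eqxx => ->. Qed.

Lemma Qk_Gset C k v : (k <= C)%N -> Qk k v -> Gset C v.
Proof.
move=> HkC [x [j [Hj [HI ->]]]] k'.
case: (eqVneq k' k) => [->|Hne].
  exists x, j; split => //; split; last by move=> i Hi; rewrite pl_eval.
  rewrite /E HkC => b Hb; have [r ->] := gen Hb.
  have iD : is_ideal (idealD J (idealM (idealX I k) K)).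
    apply: idealD_ideal => //; exact: (idealM_ideal _ (idealX_ideal _ _)).
  rewrite mulr_sumr; apply: ideal_sum => // i.
  have -> : x * (r i * a i) = r i * (- j i + (x * a i + j i)) by ring.
  case: iD => _ [_ DM]; apply: DM.
  exists (- j i), (x * a i + j i); split; first by apply: ideal_opp.
  split => //; exact: HI.
exists 0, (fun _ => 0); split; first by case: iJ.
split; first by case: (E_ideal C k').
move=> i _; rewrite /pl (negbTE Hne) /=; ring.
Qed.

Lemma main_sec : exists t : nat, (0 < t)%N /\
    forall n : nat, (t <= n)%N ->
      set_eq (colon (idealD J (idealM (idealX I n) K)) I)
             (idealD (colon J I) (idealM (idealX I n.-1) K)).
Proof.
have [sF NF _] := F_props s.
have [C HC] : exists C, forall k v, (C <= k)%N -> Gen k v -> Gen C v.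
  apply: NF.
  - move=> k; exact: Gen_submod.
  - move=> k v Hv S sS HS; apply: Hv => // k' w Hk'; apply: HS; exact: leqW.
  - move=> k v Hv; apply: Hv => //; move=> k' w _; exact: Qk_F.
exists C.+1; split => // n Hn x; split.
- move=> Hx.
  have Hch : forall i, exists p : R * R, J p.1 /\ idealM (idealX I n) K p.2 /\ x * a i = p.1 + p.2.
    move=> i; have [jj [w [? [? ?]]]] := Hx (a i) (aI i); by exists (jj, w).
  pose f i := proj1_sig (constructive_indefinite_description _ (Hch i)).
  have fP : forall i, J (f i).1 /\ idealM (idealX I n) K (f i).2 /\ x * a i = (f i).1 + (f i).2.
    move=> i; exact: (proj2_sig (constructive_indefinite_description _ (Hch i))).
  pose v := pl s n (fun i => x * a i + - (f i).1).
  have Qv : Qk n v.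
    exists x, (fun i => - (f i).1); split; first by move=> i; apply: ideal_opp => //; case: (fP i).
    split => // i _; have [_ [Hw Heq]] := fP i.
    by have -> : x * a i + - (f i).1 = (f i).2 by rewrite Heq; ring.
  have Gv : Gen n v by move=> S sS HS; exact: (HS n).
  have GC := HC _ _ (ltnW Hn) Gv.
  have Gs : Gset C v by apply: GC; [exact: Gset_submod | move=> k w Hk Hw; exact: Qk_Gset Hk Hw].
  have [y [j' [Hj' [Ey Hv]]]] := Gs n.
  move: Ey; rewrite /E leqNgt Hn /= => -[jj [z [Hjj [Hz Hy]]]].
  exists (x - y + jj), z; split; last by split => //; rewrite Hy; ring.
  move=> b Hb; rewrite mulrDl; case: iJ => _ [JD JM]; apply: (JD); last by apply: ideal_mulr.
  have [r ->] := gen Hb; rewrite mulr_sumr; apply: ideal_sum => // i.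
  have Hvi := Hv i (ltn_ord i); rewrite /v pl_eval // in Hvi.
  have -> : (x - y) * (r i * a i) = r i * ((f i).1 + j' i).
    have H : x * a i = y * a i + j' i + (f i).1 by rewrite -Hvi; ring.
    transitivity (r i * (x * a i - y * a i)); first ring.
    rewrite H; ring.
  apply: JM; apply: JD => //; by case: (fP i).
- case=> u [z [Hu [Hz ->]]] b Hb; exists (u * b), (z * b); split; first exact: Hu.
  split; last by rewrite mulrDl.
  rewrite mulrC; have -> : n = n.-1.+1 by rewrite prednK //; apply: leq_trans Hn.
  by apply: mulIX.
Qed.

End Main.

Local Close Scope ring_scope.
Unset Implicit Arguments.

Theorem corollary2p6 (R : comPzRingType) (I J K : R -> Prop) :
  noetherian R -> is_ideal I -> is_ideal J -> is_ideal K ->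
  exists t : nat, (0 < t)%N /\
    forall n : nat, (t <= n)%N ->
      set_eq (colon (idealD J (idealM (idealX I n) K)) I)
             (idealD (colon J I) (idealM (idealX I n.-1) K)).
Proof.
move=> noeR iI iJ iK; have [s [a [aI gen]]] := fg noeR iI.
by eapply main_sec; eauto.
Qed.
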